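(* Let $N\ge1$, $i\in\langle N\rangle$ and let $u$ be a word over $\langle N\rangle$ with $|u|\ge 2$. Then the antipode of the interval partition Hopf algebra $\mathcal H^N$ satisfies \[ S_{\mathcal H}(Y_u^i)=\sum_{T\in \mathbf{RT}_u^i}(-1)^{\mathbf v(T)}\,\Lambda_{\uparrow r}(T). \]
   Context: Let $\langle N\rangle=\{1,\dots,N\}$. For a word $u=u(1)\cdots u(p)$ over $\langle N\rangle$ write $|u|=p$. The interval partition Hopf algebra $\mathcal H=\mathcal H^N$ is, as an algebra, the free unital associative complex algebra on generators $Y_u^i$ ($i\in\langle N\rangle$, $|u|\ge 2$); one sets $Y_j^i=\delta_{ij}1$ for single letters $i,j$. Its counit $\varepsilon$ is the algebra homomorphism with $\varepsilon(Y_u^i)=0$, and its comultiplication is the algebra homomorphism $\Delta$ with $\Delta(Y_u^i)=\sum_{q=1}^{p}\sum_{(C_1,\dots,C_q)}\sum_{v\in\langle N\rangle^q} Y_{u|C_1}^{v(1)}\cdots Y_{u|C_q}^{v(q)}\otimes Y_v^i$, where $p=|u|$, the middle sum is over all partitions of $\{1,\dots,p\}$ into $q$ nonempty consecutive intervals $C_1<\dots<C_q$, and $u|C_k$ is the subword of $u$ indexed by $C_k$. It is a connected graded bialgebra with antipode $S_{\mathcal H}$. Trees: a colored planar tree is a finite rooted tree in which the children of each vertex are linearly ordered (left to right) and each vertex $x$ has a color $c(x)\in\langle N\rangle$, up to isomorphism preserving root, child orders and colors. A leaf has no children. A tree is reduced if every non-leaf vertex has at least two children. $\mathbf{RT}_u^i$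 is the set of reduced colored planar trees whose root has color $i$ and whose leaves, read left to right, have colors $u(1),\dots,u(p)$. For a non-leaf vertex $x$ with children $y_1<\dots<y_k$, $Y(x)=Y^{c(x)}_{c(y_1)\cdots c(y_k)}$. $\mathbf v(T)$ is the number of non-leaf vertices. $\Lambda_{\uparrow r}(T)=Y(y_1)\cdots Y(y_r)$ where $y_1,\dots,y_r$ are the non-leaf vertices in the order $\prec_r$ defined by: $x\prec_r y$ iff either $y$ is a proper ancestor of $x$, or, letting $z$ be the nearest common ancestor of $x$ and $y$, the child of $z$ on the path to $x$ lies to the right of the child of $z$ on the path to $y$ (equivalently: postorder with children visited from right to left; the root comes last). *)

(* Defs.v *)
From HB Require Import structures.
From mathcomp Require Import all_boot all_order all_algebra.
From mathcomp Require Import reals.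
From mathcomp Require Import complex.
From mathcomp Require Import finmap monalg.
From Stdlib Require List.
Set Implicit Arguments. Unset Strict Implicit. Unset Printing Implicit Defensive.
Import GRing.Theory.
Local Open Scope ring_scope.

(* Colors <N> = {1,...,N} are represented by 'I_N = {0,...,N-1}.
   The generators Y_u^i with |u| >= 2. *)
Definition IPGen (N : nat) := {p : 'I_N * seq 'I_N | (1 < size p.2)%N}.

(* The interval partition Hopf algebra H^N, as an algebra: the free unital
   associative algebra over C = R[i] (R the real numbers, given as a realType)
   on the generators Y_u^i, i.e. the monoid algebra of the free monoid
   on IPGen N. *)
Notation IPH N R := {malg (complex R)[{fmonom (IPGen N)}]}.

Section IPHopf.
Variables (N : nat) (R : realType).
Local Notation H := (IPH N R).

(* Y_w^i for an arbitrary word w: the generator if |w| >= 2,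
   delta_{ij} 1 if w = j is a single letter (0 for the empty word, never used). *)
Definition Yw (i : 'I_N) (w : seq 'I_N) : H :=
  match insub (i, w) : option (IPGen N) with
  | Some g => << fmu g >>
  | None => if w is [:: j] then (i == j)%:R else 0
  end.

(* All ways of cutting a word into nonempty consecutive pieces
   (= all partitions of {1..p} into consecutive intervals C_1 < ... < C_q,
   listed as the sequence of subwords u|C_1, ..., u|C_q). *)
Fixpoint splits (T : Type) (u : seq T) : seq (seq (seq T)) :=
  match u with
  | [::] => [:: [::]]
  | x :: u' =>
      flatten [seq ([:: x] :: ps) ::
                   (if ps is p1 :: r then [:: (x :: p1) :: r] else [::])
              | ps <- splits u']
  end.

(* Delta(Y_u^i), as the list of simple tensors a (x) b (all coefficients 1):
   sum over interval partitions (C_1..C_q) and v in <N>^q of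
   Y_{u|C_1}^{v(1)} ... Y_{u|C_q}^{v(q)} (x) Y_v^i. *)
Definition DeltaGen (i : 'I_N) (u : seq 'I_N) : seq (H * H) :=
  flatten [seq [seq (\prod_(k < size ps) Yw (tnth v k) (nth [::] ps k),
                     Yw i (tval v))
               | v : (size ps).-tuple 'I_N]
          | ps <- splits u].

Definition tensor_mul (s t : seq (H * H)) : seq (H * H) :=
  [seq (a.1 * b.1, a.2 * b.2) | a <- s, b <- t].

(* Delta of a monomial g_1 ... g_k (Delta is an algebra homomorphism),
   as a list of simple tensors. *)
Definition DeltaMon (m : {fmonom (IPGen N)}) : seq (H * H) :=
  foldr (fun g acc => tensor_mul (DeltaGen (sval g).1 (sval g).2) acc)
        [:: (1, 1)] (fmonom_val m).

(* m o (f (x) g) o Delta, for linear maps f g : H -> H. *)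
Definition conv (f g : H -> H) (x : H) : H :=
  \sum_(m <- msupp x) mcoeff m x *: \sum_(ab <- DeltaMon m) f ab.1 * g ab.2.

(* Counit: the algebra homomorphism killing all generators, i.e. the
   coefficient of the empty monomial. *)
Definition counit (x : H) : complex R := mcoeff (mone : {fmonom (IPGen N)}) x.

(* S is an antipode: a linear map that is a two-sided convolution inverse
   of the identity (such a map is unique). *)
Definition is_antipode (S : {linear H -> H}) : Prop :=
  forall x : H, conv S id x = counit x *: 1 /\ conv id S x = counit x *: 1.

Inductive ptree : Type := PNode of 'I_N & seq ptree.

Definition pcolor (T : ptree) : 'I_N := let: PNode c _ := T in c.

Fixpoint pleaves (T : ptree) : seq 'I_N :=
  let: PNode c ts := T in
  if ts is [::] then [:: c] else flatten (map pleaves ts).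

Fixpoint preduced (T : ptree) : bool :=
  let: PNode c ts := T in (size ts != 1%N) && all preduced ts.

Fixpoint pinner (T : ptree) : nat :=
  let: PNode c ts := T in
  if ts is [::] then 0%N else (sumn (map pinner ts)).+1.

(* Lambda_{up r}(T): product of Y(x) over non-leaf vertices x in the
   order <_r (postorder, children visited from right to left, root last). *)
Fixpoint Lambda_r (T : ptree) : H :=
  let: PNode c ts := T in
  if ts is [::] then 1
  else (\prod_(y <- rev (map Lambda_r ts)) y) * Yw c (map pcolor ts).

Definition RT (i : 'I_N) (u : seq 'I_N) (T : ptree) : Prop :=
  preduced T /\ pcolor T = i /\ pleaves T = u.

End IPHopf.

(* Main.v *)
Require Import Defs.
From HB Require Import structures.
From mathcomp Require Import all_boot all_order all_algebra.
From mathcomp Require Import reals complex finmap monalg.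
From Stdlib Require List.
From mathcomp Require Import zify.
Set Implicit Arguments. Unset Strict Implicit. Unset Printing Implicit Defensive.
Import GRing.Theory Num.Theory.
Local Open Scope ring_scope.
Lemma uniq_flatten_key (A B C : eqType) (F : B -> seq A) (key : A -> C)
  (h : B -> C) (s : seq B) :
  uniq (map h s) -> (forall b, b \in s -> uniq (F b)) ->
  (forall b a, b \in s -> a \in F b -> key a = h b) ->
  uniq (flatten (map F s)).
Proof.
elim: s => [|b s IH] //= /andP[hb us] Fu Fk.
rewrite cat_uniq Fu ?mem_head //= IH //; last 2 first.
- by move=> b' bs; apply: Fu; rewrite in_cons bs orbT.
- by move=> b' a bs; apply: Fk; rewrite in_cons bs orbT.
rewrite andbT; apply/hasPn => a /flatten_mapP [b' b's aFb']; apply/negP => aFb.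
have e1 := Fk b a (mem_head _ _) aFb.
have bs' : b' \in b :: s by rewrite in_cons b's orbT.
have e2 := Fk b' a bs' aFb'.
by move: hb; rewrite -e1 e2 (map_f h b's).
Qed.

Section Splits.
Variable T : eqType.

Lemma splits_sound (u : seq T) ps : ps \in splits u ->
  flatten ps = u /\ all (fun p => p != [::]) ps.
Proof.
elim: u ps => [|x u IH] ps /=.
  by rewrite inE => /eqP ->.
case/flatten_mapP => qs /IH [fq aq]; rewrite inE => /orP [/eqP ->|] /=.
  by rewrite fq aq.
case: qs fq aq => [|p1 r] //= fq aq; rewrite inE => /eqP -> /=.
by rewrite fq; move: aq => /andP[_ ->].
Qed.

Lemma splits_complete (u : seq T) ps : flatten ps = u ->
  all (fun p => p != [::]) ps -> ps \in splits u.
Proof.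
elim: u ps => [|x u IH] [|q r] //=.
- by case: q.
case: q => [|y q'] //= [-> e] ar.
apply/flatten_mapP; case: q' e => [|z q''] /= e.
  by exists r; [apply: IH | rewrite mem_head].
exists ((z :: q'') :: r); first by apply: IH => //=; rewrite ar.
by rewrite !inE eqxx orbT.
Qed.

Definition skey (qs : seq (seq T)) : seq (seq T) :=
  match qs with
  | (_ :: [::]) :: r => r
  | (_ :: p1) :: r => p1 :: r
  | _ => [::]
  end.

Lemma splits_uniq (u : seq T) : uniq (splits u).
Proof.
elim: u => [|x u IH] //=.
apply: (@uniq_flatten_key _ _ _ _ skey id); first by rewrite map_id.
- move=> ps /splits_sound [_]; case: ps => [|p1 r] //=.
  case: p1 => [|z p1] //= _; rewrite andbT inE.
  by apply/negP => /eqP [].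
- move=> ps qs /splits_sound [_ aq]; rewrite inE => /orP [/eqP -> //|].
  case: ps aq => [|p1 r] //=; rewrite inE => /andP [] + _ /eqP ->.
  by case: p1.
Qed.

Lemma splits_single (u : seq T) ps : ps \in splits u -> size ps = 1%N -> ps = [:: u].
Proof.
move=> /splits_sound [<- _]; case: ps => [|p [|]] //= _.
by rewrite cats0.
Qed.

Lemma size_piece (ps : seq (seq T)) p : all (fun p => p != [::]) ps ->
  p \in ps -> (size p + (size ps).-1 <= size (flatten ps))%N.
Proof.
elim: ps => [|q ps IH] //= /andP[qn aps]; rewrite inE => /orP [/eqP ->|pps].
  rewrite size_cat leq_add2l.
  elim: ps aps {IH} => [|r ps IH2] //= /andP[rn aps].
  rewrite size_cat; case: r rn => //= z r _.
  by rewrite addSn ltnS (leq_trans (IH2 aps)) // leq_addl.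
have := IH aps pps; rewrite size_cat.
case: ps pps {IH aps} => [|r ps] //= _ h.
case: q qn => //= z q _; rewrite addnS addSn ltnS.
by rewrite (leq_trans h) // leq_addl.
Qed.

End Splits.
Section PTreeEq.
Variable N : nat.

Definition ptree_ind2 (P : ptree N -> Prop)
  (H : forall c ts, (forall t, List.In t ts -> P t) -> P (PNode c ts)) :
  forall t, P t :=
  fix F t := let: PNode c ts := t in
    H c ts ((fix G (ts : seq (ptree N)) : forall t, List.In t ts -> P t :=
      match ts with
      | [::] => fun t (h : List.In t [::]) => False_ind _ h
      | t0 :: ts' => fun t h =>
          match h with
          | or_introl e => eq_ind t0 P (F t0) t e
          | or_intror h' => G ts' t h'
          end
      end) ts).

Fixpoint penc (t : ptree N) : GenTree.tree 'I_N :=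
  let: PNode c ts := t in GenTree.Node 0 (GenTree.Leaf c :: map penc ts).

Fixpoint pdec (x : GenTree.tree 'I_N) : option (ptree N) :=
  match x with
  | GenTree.Node _ (GenTree.Leaf c :: xs) => Some (PNode c (pmap pdec xs))
  | _ => None
  end.

Lemma pencK : pcancel penc pdec.
Proof.
elim/ptree_ind2 => c ts IH /=; congr (Some (PNode c _)).
elim: ts IH => [|t ts IH2] //= H.
by rewrite (H t (or_introl erefl)) /= IH2 // => t' h; apply: H; right.
Qed.

HB.instance Definition _ := Countable.copy (ptree N) (pcan_type pencK).

Lemma In_mem (T : eqType) (x : T) s : List.In x s <-> x \in s.
Proof.
elim: s => [|y s IH] //=; rewrite inE; split.
- by case=> [->|/IH ->]; rewrite ?eqxx ?orbT.
- by case/orP => [/eqP ->|/IH]; [left|right].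
Qed.

Lemma NoDup_uniq (T : eqType) (s : seq T) : List.NoDup s -> uniq s.
Proof.
elim: s => [|x s IH] //= h; inversion h; subst.
by rewrite IH // andbT; apply/negP => /In_mem.
Qed.

End PTreeEq.
Section Trees.
Variable N : nat.
Implicit Types (c : 'I_N) (w : seq 'I_N) (t : ptree N).
Local Notation pleaves := (@pleaves N).
Local Notation pcolor := (@pcolor N).
Local Notation preduced := (@preduced N).

Definition children t := let: PNode _ ts := t in ts.

Fixpoint choices (A : Type) (Ls : seq (seq A)) : seq (seq A) :=
  if Ls is L :: Ls' then [seq x :: xs | x <- L, xs <- choices Ls'] else [:: [::]].

Lemma choicesP (A : eqType) (Ls : seq (seq A)) ts (x0 : A) :
  ts \in choices Ls <->
  size ts = size Ls /\ forall k, (k < size Ls)%N -> nth x0 ts k \in nth [::] Ls k.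
Proof.
elim: Ls ts => [|L Ls IH] [|t ts] /=.
- by split=> // _; split.
- by rewrite inE; split=> // [[]].
- split; last by case.
  by case/allpairsP => -[x xs] [].
- split.
  + case/allpairsP => -[x xs] /= [xL /IH [sz H] [-> ->]]; split; first by rewrite sz.
    by case=> [|k] //= klt; apply: H.
  + case=> [[sz] H]; apply/allpairsP; exists (t, ts); split=> //=.
    * exact: (H 0%N).
    * by apply/IH; split=> // k klt; apply: (H k.+1).
Qed.

Lemma choices_uniq (A : eqType) (Ls : seq (seq A)) :
  all uniq Ls -> uniq (choices Ls).
Proof.
elim: Ls => [|L Ls IH] //= /andP[uL uLs].
apply: allpairs_uniq => //; first exact: IH.
by move=> [x xs] [y ys] _ _ /= [-> ->].
Qed.

Definition tbody (tr : 'I_N -> seq 'I_N -> seq (ptree N)) c w : seq (ptree N) :=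
  flatten [seq flatten [seq [seq PNode c ts | ts <- choices
      [seq tr (nth c v k) (nth [::] ps k) | k <- iota 0 (size ps)]]
    | v : (size ps).-tuple 'I_N]
  | ps <- [seq ps <- splits w | (1 < size ps)%N]].

Fixpoint trees (n : nat) c w {struct n} : seq (ptree N) :=
  if n is n'.+1 then
    match w with
    | [:: x] => if c == x then [:: PNode c [::]] else [::]
    | _ => tbody (trees n') c w
    end
  else [::].

Lemma treesE n c w : size w != 1%N -> trees n.+1 c w = tbody (trees n) c w.
Proof. by case: w => [|x [|y w]]. Qed.

Lemma mem_tbody tr c w t : t \in tbody tr c w ->
  exists ps (v : (size ps).-tuple 'I_N) ts,
  [/\ ps \in splits w, (1 < size ps)%N,
      ts \in choices [seq tr (nth c v k) (nth [::] ps k) | k <- iota 0 (size ps)]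
    & t = PNode c ts].
Proof.
case/flatten_mapP => ps; rewrite mem_filter => /andP[sz psw].
case/flatten_mapP => v _ /mapP [ts tsin ->].
by exists ps, v, ts.
Qed.

Lemma mem_tbodyI tr c w ps (v : (size ps).-tuple 'I_N) ts :
  ps \in splits w -> (1 < size ps)%N ->
  ts \in choices [seq tr (nth c v k) (nth [::] ps k) | k <- iota 0 (size ps)] ->
  PNode c ts \in tbody tr c w.
Proof.
move=> psw sz tsin; apply/flatten_mapP; exists ps; first by rewrite mem_filter sz.
apply/flatten_mapP; exists v; first by rewrite mem_enum.
by apply/mapP; exists ts.
Qed.

Lemma nth_Ls (tr : 'I_N -> seq 'I_N -> seq (ptree N)) c (ps : seq (seq 'I_N)) (v : seq 'I_N) k : (k < size ps)%N ->
  nth [::] [seq tr (nth c v k) (nth [::] ps k) | k <- iota 0 (size ps)] k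
  = tr (nth c v k) (nth [::] ps k).
Proof. by move=> klt; rewrite (nth_map 0%N) ?size_iota // nth_iota. Qed.

Lemma choices_trees (tr : 'I_N -> seq 'I_N -> seq (ptree N)) c ps (v : seq 'I_N) ts :
  (forall c' w' t', t' \in tr c' w' -> pcolor t' = c' /\ pleaves t' = w') ->
  size v = size ps ->
  ts \in choices [seq tr (nth c v k) (nth [::] ps k) | k <- iota 0 (size ps)] ->
  [/\ map pleaves ts = ps, map pcolor ts = v
    & forall k, (k < size ts)%N ->
        nth (PNode c [::]) ts k \in tr (nth c v k) (nth [::] ps k)].
Proof.
move=> Htr szv.
move/(choicesP _ _ (PNode c [::])); rewrite size_map size_iota => -[szts H].
have H' k : (k < size ts)%N -> nth (PNode c [::]) ts k \in tr (nth c v k) (nth [::] ps k).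
  move=> klt; have klt' : (k < size ps)%N by rewrite -szts.
  by rewrite -(nth_Ls tr c v klt'); apply: H.
split=> //.
- apply: (@eq_from_nth _ [::]); first by rewrite size_map.
  move=> k; rewrite size_map => klt; rewrite (nth_map (PNode c [::])) //.
  by have [] := Htr _ _ _ (H' k klt).
- apply: (@eq_from_nth _ c); first by rewrite size_map szv.
  move=> k; rewrite size_map => klt; rewrite (nth_map (PNode c [::])) //.
  by have [] := Htr _ _ _ (H' k klt).
Qed.

Lemma tbody_children tr c w t :
  (forall c' w' t', t' \in tr c' w' -> pcolor t' = c' /\ pleaves t' = w') ->
  t \in tbody tr c w ->
  exists ps (v : (size ps).-tuple 'I_N) ts,
  [/\ ps \in splits w, (1 < size ps)%N, t = PNode c ts &
   [/\ map pleaves ts = ps, map pcolor ts = v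
    & forall k, (k < size ts)%N ->
        nth (PNode c [::]) ts k \in tr (nth c v k) (nth [::] ps k)]].
Proof.
move=> Htr /mem_tbody [ps [v [ts [psw sz tsin ->]]]].
have [] := choices_trees Htr (size_tuple v) tsin.
by exists ps, v, ts.
Qed.

Lemma pleaves_nonempty t : pleaves t != [::].
Proof.
elim/ptree_ind2: t => c [|t0 ts] //= IH.
by rewrite -size_eq0 size_cat -lt0n (leq_trans _ (leq_addr _ _)) // lt0n size_eq0 IH //; left.
Qed.

Lemma trees_RT n c w t : t \in trees n c w ->
  [/\ preduced t, pcolor t = c & pleaves t = w].
Proof.
elim: n c w t => [|n IH] c w t //=.
case: (eqVneq (size w) 1%N) => [|w1].
  case: w => [|x [|y w]] //= _; case: eqP => [<-|] //; rewrite inE => /eqP -> //.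
rewrite -/(trees n.+1 c w) treesE //.
case/tbody_children; first by move=> c' w' t' /IH [].
move=> ps [v [ts [psw sz -> [lv cv H]]]].
have szts : size ts = size ps by rewrite -lv size_map.
have [fw _] := splits_sound psw.
split=> //=.
- rewrite szts neq_ltn sz orbT /=; apply/(all_nthP (PNode c [::])) => k klt.
  by have [] := IH _ _ _ (H k klt).
- case: ts lv cv szts {H} => [|t0 ts] lv _ szts; first by move: sz; rewrite -szts.
  by rewrite lv.
Qed.

Lemma tbody_ext tr1 tr2 c w :
  (forall c' w', (size w' < size w)%N -> tr1 c' w' = tr2 c' w') ->
  tbody tr1 c w = tbody tr2 c w.
Proof.
move=> H; rewrite /tbody; congr flatten; apply/eq_in_map => ps.
rewrite mem_filter => /andP[sz psw]; congr flatten; rewrite /image_mem.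
apply: eq_map => v; congr map; congr choices; apply/eq_in_map => k.
rewrite mem_iota => /andP[_ klt]; apply: H.
have [fw aps] := splits_sound psw.
have := size_piece aps (mem_nth [::] klt); rewrite fw.
by case: (size ps) sz => [|[|q]] // _ /=; lia.
Qed.

Lemma trees_fuel n m c w : (size w <= n)%N -> (size w <= m)%N ->
  trees n c w = trees m c w.
Proof.
elim: n m c w => [|n IH] [|m] c w //=.
- by case: w.
- by case: w.
move=> hn hm; case: (eqVneq (size w) 1%N) => [|w1].
  by case: w hn hm => [|x [|y w]].
rewrite -/(trees n.+1 c w) -/(trees m.+1 c w) !treesE //.
apply: tbody_ext => c' w' lt; apply: IH.
- by rewrite -ltnS (leq_trans lt).
- by rewrite -ltnS (leq_trans lt).
Qed.

Lemma trees_uniq n c w : uniq (trees n c w).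
Proof.
elim: n c w => [|n IH] c w //=.
case: (eqVneq (size w) 1%N) => [|w1].
  by case: w => [|x [|y w]] //= _; case: eqP.
rewrite -/(trees n.+1 c w) treesE //.
rewrite /tbody.
apply: (@uniq_flatten_key _ _ _ _ (fun t => map pleaves (children t)) id).
- by rewrite map_id filter_uniq // splits_uniq.
- move=> ps; rewrite mem_filter => /andP[sz psw].
  apply: (@uniq_flatten_key _ _ _ _ (fun t => map pcolor (children t)) (fun v => tval v)).
  + by rewrite /image_mem map_inj_uniq ?enum_uniq //; apply: val_inj.
  + move=> v _; rewrite map_inj_uniq; last by move=> a b [].
    apply: choices_uniq; apply/allP => L /mapP [k _ ->]; exact: IH.
  + move=> v t _ /mapP [ts tsin ->] /=.
    by case: (choices_trees (fun c' w' t' (h : t' \in trees n c' w') =>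
              let: And3 _ a b := trees_RT h in conj a b) (size_tuple v) tsin).
- move=> ps t _ /flatten_mapP [v _] /mapP [ts tsin ->] /=.
  by case: (choices_trees (fun c' w' t' (h : t' \in trees n c' w') =>
            let: And3 _ a b := trees_RT h in conj a b) (size_tuple v) tsin).
Qed.

Lemma trees_complete t c w n :
  [/\ preduced t, pcolor t = c & pleaves t = w] -> (size w <= n)%N ->
  t \in trees n c w.
Proof.
move: c w n; elim/ptree_ind2: t => c' ts IH c w n [red /= <- <-] hn.
case: ts IH red hn => [|t0 ts'] IH red hn.
  by case: n hn => [|n] //= _; rewrite eqxx mem_head.
move: red => /= /andP[szts allred].
have ne : all (fun p => p != [::]) (map pleaves (t0 :: ts')).
  by apply/allP => p /mapP [t _ ->]; apply: pleaves_nonempty.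
have szge : (1 < size (t0 :: ts'))%N by move: szts; case: (ts').
have hsz t : t \in t0 :: ts' -> (size (pleaves t) + (size (t0 :: ts')).-1 <=
    size (flatten (map pleaves (t0 :: ts'))))%N.
  by move=> tin; have := size_piece ne (map_f pleaves tin); rewrite size_map.
have ht0 := hsz t0 (mem_head _ _).
have := pleaves_nonempty t0; rewrite -size_eq0 => nz0.
case: n hn => [|n] hn; first by move: hn; rewrite leqn0 => /eqP h; rewrite h in ht0; lia.
rewrite treesE; last by apply/eqP => h; rewrite h in ht0; move: szge ht0 nz0 => /=; lia.
have szv : size (map pcolor (t0 :: ts')) == size (map pleaves (t0 :: ts')) by rewrite !size_map.
apply: (@mem_tbodyI _ _ _ _ (Tuple szv)).
- by apply: splits_complete.
- by rewrite size_map.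
apply/(choicesP _ _ (PNode c [::])); split; first by rewrite !size_map size_iota.
move=> k klt0; have klt : (k < size (t0 :: ts'))%N by move: klt0; rewrite !size_map size_iota.
rewrite nth_Ls ?size_map // (_ : tval (Tuple szv) = map pcolor (t0 :: ts')) //.
rewrite (nth_map (PNode c [::])) // (nth_map (PNode c [::])) //.
set tk := nth _ _ k.
have tkin : tk \in t0 :: ts' by apply: mem_nth.
apply: IH.
- by apply/In_mem.
- have allr : all preduced (t0 :: ts') := allred.
  by split=> //; move/allP: allr; apply.
- have := hsz tk tkin; move: hn szge; rewrite -/tk; lia.
Qed.

Lemma sum_rts (V : nmodType) (f : ptree N -> V) (rts : seq (ptree N)) i u :
  List.NoDup rts -> (forall T, List.In T rts <-> RT i u T) ->
  \sum_(T <- rts) f T = \sum_(T <- trees (size u) i u) f T.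
Proof.
move=> nd H; apply: perm_big; apply: uniq_perm.
- exact: NoDup_uniq.
- exact: trees_uniq.
move=> T; apply/idP/idP.
- move/In_mem/H; rewrite /RT => -[r [c l]].
  by apply: (@trees_complete T i u).
- move/trees_RT => [r c l]; apply/In_mem/H; rewrite /RT; split=> //.
Qed.

End Trees.
Section Alg.
Variables (N : nat) (R : realType).
Local Notation H := (IPH N R).
Local Notation G := (IPGen N).
Local Notation M := {fmonom G}.
Local Notation pleaves := (@pleaves N).
Local Notation pcolor := (@pcolor N).

Definition deg (m : M) : nat := sumn [seq (size (val g).2).-1 | g <- fmonom_val m].

Definition phi (t : ptree N) : H := (-1) ^+ pinner t * Lambda_r R t.

Definition Gen (p : 'I_N * seq 'I_N) : H :=
  \sum_(t <- trees (size p.2) p.1 p.2) phi t.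

Definition S0 (m : M) : H := (\prod_(g <- rev (fmonom_val m)) Gen (val g))%R.

Definition S0lin (x : H) : H := \sum_(m <- msupp x) x@_m *: S0 m.

Lemma S0lin0 : S0lin 0 = 0.
Proof. by rewrite /S0lin msupp0 big_seq_fset0. Qed.

Lemma S0linU m : S0lin << m >> = S0 m.
Proof. by rewrite /S0lin msuppU1 big_seq_fset1 mcoeffUU scale1r. Qed.

Lemma monoM (m1 m2 : M) : << m1 >> * << m2 >> = << (mmul m1 m2) >> :> H.
Proof. by rewrite malgM_def fgmulUU mulr1. Qed.

Lemma fmval_mul (m1 m2 : M) : fmonom_val (mmul m1 m2) = fmonom_val m1 ++ fmonom_val m2.
Proof. exact: fmM. Qed.

Lemma S0M (m1 m2 : M) : S0 (mmul m1 m2) = S0 m2 * S0 m1.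
Proof. by rewrite /S0 fmval_mul rev_cat big_cat. Qed.

Lemma one_mono : (1 : H) = << (mone : M) >>.
Proof. by rewrite -mpolyC1E. Qed.

Lemma fmval1 : fmonom_val (mone : M) = [::].
Proof. exact: fm1. Qed.

Lemma S01 : S0 (mone : M) = 1.
Proof. by rewrite /S0 fmval1 big_nil. Qed.

Lemma degM (m1 m2 : M) : deg (mmul m1 m2) = (deg m1 + deg m2)%N.
Proof. by rewrite /deg fmval_mul map_cat sumn_cat. Qed.

Lemma deg1 : deg (mone : M) = 0%N.
Proof. by rewrite /deg fmval1. Qed.

Lemma degU (g : G) : deg (fmu g) = (size (val g).2).-1.
Proof. by rewrite /deg fmU /= addn0. Qed.

Definition monoD (x : H) (d : nat) := x = 0 \/ exists m, x = << m >> /\ deg m = d.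

Lemma Yw_gen (i : 'I_N) w (h : (1 < size w)%N) :
  Yw R i w = << fmu (exist _ (i, w) h : G) >>.
Proof.
rewrite /Yw; case: insubP => [g _ gv|]; last by rewrite /= h.
by congr << fmu _ >>; apply: val_inj.
Qed.

Lemma Yw1 (i x : 'I_N) : Yw R i [:: x] = (i == x)%:R.
Proof. by rewrite /Yw insubF. Qed.

Lemma Yw_monoD i w : w != [::] -> monoD (Yw R i w) (size w).-1.
Proof.
case: w => [|x [|y w]] // _.
  rewrite Yw1; case: eqP => _; [right; exists (mone : M)|left] => //.
  by rewrite one_mono deg1.
right; exists (fmu (exist _ (i, [:: x, y & w]) isT : G)); split.
  exact: Yw_gen.
by rewrite degU.
Qed.

Lemma S0lin_Yw i w : w != [::] -> S0lin (Yw R i w) = Gen (i, w).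
Proof.
case: w => [|x [|y w]] // _.
  rewrite Yw1 /Gen /=; case: (eqVneq i x) => [->|_].
    by rewrite mulr1n one_mono S0linU S01 big_seq1 /phi /= mul1r.
  by rewrite mulr0n S0lin0 big_nil.
rewrite (Yw_gen _ (isT : (1 < size [:: x, y & w])%N)) S0linU /S0 fmU /=.
by rewrite big_seq1.
Qed.

Lemma monoD_mul x y dx dy : monoD x dx -> monoD y dy -> monoD (x * y) (dx + dy).
Proof.
case=> [hx|[m1 [hx d1]]]; first by move=> _; left; rewrite hx mul0r.
case=> [hy|[m2 [hy d2]]]; first by left; rewrite hy mulr0.
by right; exists (mmul m1 m2); rewrite hx hy monoM degM d1 d2.
Qed.

Lemma S0lin_mul x y dx dy : monoD x dx -> monoD y dy ->
  S0lin (x * y) = S0lin y * S0lin x.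
Proof.
case=> [hx|[m1 [hx _]]]; first by move=> _; rewrite hx mul0r S0lin0 mulr0.
case=> [hy|[m2 [hy _]]]; first by rewrite hy mulr0 S0lin0 mul0r.
by rewrite hx hy monoM !S0linU S0M.
Qed.

Lemma prod_monoD (X : Type) (s : seq X) (F : X -> H) (D : X -> nat) :
  (forall x, List.In x s -> monoD (F x) (D x)) ->
  monoD (\prod_(x <- s) F x)%R (\sum_(x <- s) D x)%N /\
  S0lin (\prod_(x <- s) F x)%R = (\prod_(x <- rev s) S0lin (F x))%R.
Proof.
elim: s => [|x s IH] HF.
  by rewrite !big_nil; split; [right; exists (mone : M); rewrite one_mono deg1 | rewrite one_mono S0linU S01].
have [IH1 IH2] := IH (fun y h => HF y (or_intror h)).
have Fx := HF x (or_introl erefl).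
rewrite !big_cons rev_cons -cats1 big_cat big_seq1 /=; split.
  exact: monoD_mul.
by rewrite (S0lin_mul Fx IH1) IH2.
Qed.

End Alg.
Section Alg2.
Variables (N : nat) (R : realType).
Local Notation H := (IPH N R).
Local Notation G := (IPGen N).
Local Notation M := {fmonom G}.
Local Notation pleaves := (@pleaves N).
Local Notation pcolor := (@pcolor N).
Local Notation deg := (@deg N).
Local Notation Gen := (@Gen N R).
Local Notation S0 := (@S0 N R).
Local Notation S0lin := (@S0lin N R).
Local Notation phi := (@phi N R).
Local Notation monoD := (@monoD N R).

Definition classif (m : M) (ab : H * H) := ab.1 = 0 \/ exists m', ab.1 = << m' >> /\
  (ab.2 = 0 \/ (deg m' < deg m)%N \/ (m' = m /\ ab.2 = 1)).

Lemma classif_mono m ab : classif m ab -> exists d, monoD ab.1 d.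
Proof. by case=> [h|[m' [h _]]]; [exists 0%N; left | exists (deg m'); right; exists m']. Qed.

Lemma sum_pred_size (ps : seq (seq 'I_N)) : all (fun p => p != [::]) ps ->
  ((\sum_(p <- ps) (size p).-1) + size ps)%N = size (flatten ps).
Proof.
elim: ps => [|p ps IH]; first by rewrite big_nil.
rewrite /= => /andP[pn aps]; rewrite big_cons size_cat -IH //.
by case: p pn => //= ? ? _; lia.
Qed.

Lemma DeltaGen_class (g : G) ab :
  ab \in DeltaGen R (sval g).1 (sval g).2 -> classif (fmu g) ab.
Proof.
case: g => -[i u] /= hu.
case/flatten_mapP => ps psu /mapP [v _ ->] /=.
have [fps aps] := splits_sound psu.
have hP : monoD (\prod_(k < size ps) Yw R (tnth v k) (nth [::] ps k))%R
   (size u - size ps).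
  have [] := @prod_monoD N R _ (index_enum 'I_(size ps))
     (fun k => Yw R (tnth v k) (nth [::] ps k))
     (fun k : 'I_(size ps) => (size (nth [::] ps k)).-1).
    move=> k _; apply: Yw_monoD.
    by move/allP: aps; apply; apply: mem_nth.
  move=> h _; suff <- : (\sum_(k <- index_enum 'I_(size ps)) (size (nth [::] ps k)).-1)%N
                    = (size u - size ps)%N by [].
  have := sum_pred_size aps; rewrite fps (big_nth [::]) big_mkord.
  by move=> <-; rewrite addnK.
case: (ltngtP 1 (size ps)) => [gt1|lt1|eq1].
- case: hP => [->|[m' [-> dm]]]; first by left.
  right; exists m'; split=> //; right; left.
  by rewrite degU /= dm; lia.
- exfalso; move: lt1; rewrite ltnS leqn0 size_eq0 => /eqP eps.
  by move: hu; rewrite -fps eps.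
have eps := splits_single psu (esym eq1); subst ps.
case: v {hP} => -[|x [|y s]] // hv /=.
rewrite big_ord1 /= Yw1; case: (eqVneq i x) => [<-|_].
- right; exists (fmu (exist _ (i, u) hu)); split; last by right; right.
  exact: Yw_gen.
- case: (Yw_monoD R x (_ : u != [::])) => [|->|[m' [-> _]]]; last (by right; exists m'; split=> //; left).
  + by move: hu; case: (u).
  + by left.
Qed.

Lemma DeltaGen_top (g : G) :
  (<< fmu g >>, 1) \in DeltaGen R (sval g).1 (sval g).2.
Proof.
case: g => -[i u] /= hu.
apply/flatten_mapP; exists [:: u].
  by apply: splits_complete; rewrite /= ?cats0 ?andbT //; move: hu; case: (u).
apply/mapP; exists [tuple i]; first by rewrite mem_enum.
rewrite big_ord1; congr pair; last by rewrite Yw1 eqxx.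
by rewrite (tnth_nth i) /= (Yw_gen R i hu).
Qed.

Definition DMs (gs : seq G) : seq (H * H) :=
  foldr (fun g acc => tensor_mul (DeltaGen R (sval g).1 (sval g).2) acc)
        [:: (1, 1)] gs.

Lemma fmcons (g : G) r : mmul (fmu g) (FMonom r) = FMonom (g :: r).
Proof. by apply/eqP; rewrite fmP fmM fmU. Qed.

Lemma fmnil : (mone : M) = FMonom [::].
Proof. by apply/eqP; rewrite fmP fm1. Qed.

Lemma degcons (g : G) r : deg (FMonom (g :: r)) = (deg (fmu g) + deg (FMonom r))%N.
Proof. by rewrite -fmcons degM. Qed.

Lemma DMs_class gs ab : ab \in DMs gs -> classif (FMonom gs) ab.
Proof.
elim: gs ab => [|g r IH] ab /=.
  rewrite inE => /eqP -> /=; right; exists (FMonom [::]).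
  by rewrite -fmnil -one_mono; split=> //; right; right.
case/allpairsP => -[[a1 b1] [a2 b2]] /= [ab1 ab2 ->] /=.
have := DeltaGen_class ab1; have := IH _ ab2.
case=> [/= ->|[m2 [/= -> c2]]]; first by left; rewrite mulr0.
case=> [/= ->|[m1 [/= -> c1]]]; first by left; rewrite mul0r.
right; exists (mmul m1 m2); rewrite monoM; split=> //.
rewrite degM degcons.
case: c1 => [/= ->|[lt1|[e1 /= ->]]]; first by left; rewrite mul0r.
- case: c2 => [/= ->|[lt2|[-> _]]]; first by left; rewrite mulr0.
  + by right; left; lia.
  + by right; left; lia.
- case: c2 => [/= ->|[lt2|[-> /= ->]]]; first by left; rewrite mulr0.
  + by right; left; rewrite e1; lia.
  + by right; right; rewrite e1 fmcons mulr1.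
Qed.

Lemma DMs_top gs : (<< FMonom gs >>, 1) \in DMs gs.
Proof.
elim: gs => [|g r IH] /=; first by rewrite -fmnil -one_mono inE.
apply/allpairsP; exists ((<< fmu g >>, 1), (<< FMonom r >>, 1)); split=> //=.
  exact: DeltaGen_top.
by rewrite monoM fmcons mulr1.
Qed.

Lemma DeltaMonE (m : M) : DeltaMon R m = DMs (fmonom_val m).
Proof. by []. Qed.

Lemma convU (f g : H -> H) (m : M) :
  conv f g << m >> = \sum_(ab <- DeltaMon R m) f ab.1 * g ab.2.
Proof. by rewrite /conv msuppU1 big_seq_fset1 mcoeffUU scale1r. Qed.

Lemma counitU (m : M) : counit (<< m >> : H) = (m == mone)%:R.
Proof. by rewrite /counit mcoeffU1 eq_sym. Qed.

End Alg2.
Section Alg3.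
Variables (N : nat) (R : realType).
Local Notation H := (IPH N R).
Local Notation G := (IPGen N).
Local Notation M := {fmonom G}.
Local Notation pleaves := (@pleaves N).
Local Notation pcolor := (@pcolor N).
Local Notation deg := (@deg N).
Local Notation Gen := (@Gen N R).
Local Notation S0 := (@S0 N R).
Local Notation S0lin := (@S0lin N R).
Local Notation phi := (@phi N R).
Local Notation monoD := (@monoD N R).
Local Notation DMs := (@DMs N R).

Lemma prod_rcons (X : Type) (s : seq X) a (F : X -> H) :
  (\prod_(x <- rcons s a) F x)%R = (\prod_(x <- s) F x)%R * F a.
Proof. by rewrite -cats1 big_cat big_seq1. Qed.

Lemma prod_rev_cons (X : Type) (s : seq X) a (F : X -> H) :
  (\prod_(x <- rev (a :: s)) F x)%R = (\prod_(x <- rev s) F x)%R * F a.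
Proof. by rewrite rev_cons prod_rcons. Qed.

Lemma comm_aux (R0 : pzRingType) (a b P L : R0) : P * b = b * P -> a * b = b * a ->
  a * P * (b * L) = (b * a) * (P * L).
Proof. by move=> hP ha; rewrite mulrA -(mulrA a) hP mulrA ha !mulrA. Qed.

Lemma choices_sum (A : Type) (Ls : seq (seq A)) (f : A -> H) :
  \sum_(ts <- choices Ls) (\prod_(t <- rev ts) f t)%R =
  (\prod_(L <- rev Ls) \sum_(t <- L) f t)%R.
Proof.
elim: Ls => [|L Ls IH] /=; first by rewrite big_seq1 !big_nil.
rewrite big_allpairs_dep prod_rev_cons mulr_sumr.
apply: eq_bigr => x _; rewrite -IH mulr_suml; apply: eq_bigr => xs _.
by rewrite prod_rev_cons.
Qed.

Lemma sign_prod (ts : seq (ptree N)) :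
  (\prod_(t <- rev ts) phi t)%R =
  (-1) ^+ sumn (map (@pinner N) ts) * (\prod_(y <- rev (map (Lambda_r R) ts)) y)%R.
Proof.
elim: ts => [|t ts IH].
  rewrite [rev [::]]/= [map _ [::]]/= [rev [::]]/= !big_nil mulr1.
  by rewrite (_ : sumn [::] = 0%N); [rewrite expr0 | ].
have e1 : [seq Lambda_r R i | i <- t :: ts] = Lambda_r R t :: [seq Lambda_r R i | i <- ts] by [].
have e2 : sumn [seq pinner i | i <- t :: ts] = (pinner t + sumn [seq pinner i | i <- ts])%N by [].
rewrite prod_rev_cons IH e1 e2 prod_rev_cons.
rewrite /phi exprD; apply: comm_aux; exact: commr_sign.
Qed.

Lemma sign_aux (R0 : pzRingType) n (P Y : R0) :
  (-1) ^+ n.+1 * (P * Y) = - ((-1) ^+ n * P) * Y.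
Proof. by rewrite exprS mulN1r !mulNr mulrA. Qed.

Lemma phi_node i (ts : seq (ptree N)) : ts != [::] ->
  phi (PNode i ts) = - (\prod_(t <- rev ts) phi t)%R * Yw R i (map pcolor ts).
Proof.
move=> ne.
have -> : phi (PNode i ts) = (-1) ^+ (sumn (map (@pinner N) ts)).+1 *
   ((\prod_(y <- rev (map (Lambda_r R) ts)) y)%R * Yw R i (map pcolor ts)).
  case: ts ne => [|t0 ts] ne; first by exfalso; move: ne; rewrite eqxx.
  reflexivity.
by rewrite sign_prod sign_aux.
Qed.

End Alg3.
Lemma uniq_single (T : eqType) (s : seq T) a :
  uniq s -> a \in s -> (forall x, x \in s -> x = a) -> s = [:: a].
Proof.
case: s => [|x [|y s]] //=.
- by move=> _ _ /(_ x (mem_head _ _)) ->.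
- move=> /andP[+ _] _ H; rewrite (H x (mem_head _ _)) (H y); last first.
    by rewrite !inE eqxx orbT.
  by rewrite inE eqxx.
Qed.

Lemma rearr (R0 : pzRingType) (x y z w : R0) : x * y * (z * w) = x * (y * z) * w.
Proof. by rewrite !mulrA. Qed.

Lemma sum_if_count (V : nmodType) (T : eqType) (s : seq T) (a : T) (X : V) :
  \sum_(x <- s) (if x == a then X else 0) = X *+ count_mem a s.
Proof.
elim: s => [|y s IH]; first by rewrite big_nil.
rewrite big_cons IH /=; case: eqP => _ /=; first by rewrite mulrS.
by rewrite add0r.
Qed.

Section Alg4.
Variables (N : nat) (R : realType).
Local Notation H := (IPH N R).
Local Notation G := (IPGen N).
Local Notation M := {fmonom G}.
Local Notation pleaves := (@pleaves N).
Local Notation pcolor := (@pcolor N).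
Local Notation deg := (@deg N).
Local Notation Gen := (@Gen N R).
Local Notation S0 := (@S0 N R).
Local Notation S0lin := (@S0lin N R).
Local Notation phi := (@phi N R).
Local Notation monoD := (@monoD N R).
Local Notation DMs := (@DMs N R).

Lemma Gen_fuel n c w : w != [::] -> (size w <= n)%N ->
  \sum_(t <- trees n c w) phi t = S0lin (Yw R c w).
Proof.
move=> wn hn; rewrite (S0lin_Yw R c wn) /Gen (trees_fuel c hn (leqnn _)).
reflexivity.
Qed.

Lemma gen_id (g : G) :
  \sum_(ab <- DeltaGen R (sval g).1 (sval g).2) S0lin ab.1 * ab.2 = 0.
Proof.
case: g => -[i u] hu0.
have hu : (1 < size u)%N := hu0.
rewrite [sval _]/=.
set n := (size u).-1.
have hn : size u = n.+1 by rewrite /n; lia.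
pose E (ps : seq (seq 'I_N)) := \sum_(v <- enum {: (size ps).-tuple 'I_N})
   S0lin (\prod_(k < size ps) Yw R (tnth v k) (nth [::] ps k))%R * Yw R i v.
have DGE : \sum_(ab <- DeltaGen R (i, u).1 (i, u).2) S0lin ab.1 * ab.2 =
           \sum_(ps <- splits u) E ps.
  rewrite /DeltaGen big_flatten big_map; apply: eq_bigr => ps _.
  rewrite /image_mem big_map; reflexivity.
have partA : \sum_(ps <- splits u | ~~ (1 < size ps)%N) E ps = Gen (i, u).
  rewrite -big_filter.
  have fe : [seq ps <- splits u | ~~ (1 < size ps)%N] = [:: [:: u]].
    apply: uniq_single.
    - by rewrite filter_uniq // splits_uniq.
    - rewrite mem_filter /=; apply: splits_complete; first by rewrite /= cats0.
      by rewrite /= andbT; move: hu; case: (u).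
    - move=> ps; rewrite mem_filter => /andP[sz psu].
      have [fps _] := splits_sound psu.
      case: ps sz psu fps => [|p [|q r]] //= _ _.
      + by move=> eu; move: hu; rewrite -eu.
      + by rewrite cats0 => ->.
  rewrite fe big_seq1 /E.
  rewrite (bigD1_seq [tuple i]); [| by rewrite mem_enum | exact: enum_uniq].
  rewrite [X in _ + X = _]big1_seq; last first.
    move=> v /andP[ne _].
    case: v ne => s0 hv0 ne.
    case: s0 hv0 ne => [|x s1] hv ne; first by exfalso; clear ne; move: hv.
    case: s1 hv ne => [|y s] hv ne; last by exfalso; clear ne; move: hv.
    rewrite Yw1; case: (eqVneq i x) => [ex|nx].
      exfalso; move/eqP: ne; apply; apply: val_inj; rewrite /= ex; reflexivity.
    by rewrite mulr0n mulr0.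
  rewrite addr0 big_ord1.
  rewrite (_ : tnth [tuple i] ord0 = i); last reflexivity.
  rewrite (_ : nth [::] [:: u] ord0 = u); last reflexivity.
  have un : u != [::] by move: hu; case: (u).
  rewrite (S0lin_Yw R i un) Yw1 eqxx mulr1; reflexivity.
have partB : \sum_(ps <- splits u | (1 < size ps)%N) E ps = - Gen (i, u).
  pose Ls (ps : seq (seq 'I_N)) (v : seq 'I_N) :=
    [seq trees n (nth i v k) (nth [::] ps k) | k <- iota 0 (size ps)].
  have GenE : Gen (i, u) = \sum_(ps <- splits u | (1 < size ps)%N)
      \sum_(v <- enum {: (size ps).-tuple 'I_N})
      \sum_(ts <- choices (Ls ps v)) phi (PNode i ts).
    transitivity (\sum_(t <- trees (size u) i u) phi t); first reflexivity.
    rewrite hn treesE; last by rewrite neq_ltn hu orbT.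
    rewrite /tbody big_flatten big_map big_filter; apply: eq_bigr => ps _.
    rewrite big_flatten /image_mem big_map; apply: eq_bigr => v _.
    rewrite big_map; reflexivity.
  rewrite GenE -sumrN big_seq_cond [in RHS]big_seq_cond.
  apply: eq_bigr => ps /andP[psu sz].
  rewrite /E -sumrN; apply: eq_bigr => v _.
  have [fps aps] := splits_sound psu.
  have Htr : forall c' w' t', t' \in trees n c' w' -> pcolor t' = c' /\ pleaves t' = w'.
    by move=> c' w' t' /trees_RT [].
  rewrite (eq_big_seq (fun ts => - (\prod_(t <- rev ts) phi t)%R * Yw R i v)); last first.
    move=> ts tsin; have [lv cv _] := choices_trees Htr (size_tuple v) tsin.
    have tsn : ts != [::].
      by apply/eqP => e; move: lv sz; rewrite e => <-.
    rewrite (phi_node R i tsn) cv; reflexivity.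
  rewrite -mulr_suml sumrN choices_sum mulNr opprK; congr (_ * _).
  rewrite -map_rev big_map.
  have e : (\prod_(k < size ps) Yw R (tnth v k) (nth [::] ps k))%R =
      (\prod_(k < size ps) Yw R (nth i v k) (nth [::] ps k))%R.
    by apply: eq_bigr => k _; rewrite (tnth_nth i).
  rewrite e -(big_mkord xpredT (fun k => Yw R (nth i v k) (nth [::] ps k))).
  rewrite /index_iota subn0.
  have hF : forall k, List.In k (iota 0 (size ps)) ->
      monoD (Yw R (nth i v k) (nth [::] ps k)) ((size (nth [::] ps k)).-1).
    move=> k /In_mem; rewrite mem_iota add0n => /andP[_ klt].
    apply: Yw_monoD.
    by move/allP: aps; apply; apply: mem_nth.
  have [_ ->] := @prod_monoD N R _ (iota 0 (size ps))
     (fun k => Yw R (nth i v k) (nth [::] ps k))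
     (fun k => (size (nth [::] ps k)).-1) hF.
  apply: eq_big_seq => k; rewrite mem_rev mem_iota add0n => /andP[_ klt].
  have pn : nth [::] ps k != [::] by move/allP: aps; apply; apply: mem_nth.
  rewrite (Gen_fuel _ pn); first reflexivity.
  have := size_piece aps (mem_nth [::] klt); rewrite fps hn.
  by move: sz; case: (size ps) => [|[|q]] //= _; lia.
rewrite DGE (bigID (fun ps => (1 < size ps)%N)) partB partA.
exact: (addNr (Gen (i, u))).
Qed.

End Alg4.
Section Alg5.
Variables (N : nat) (R : realType).
Local Notation H := (IPH N R).
Local Notation G := (IPGen N).
Local Notation M := {fmonom G}.
Local Notation deg := (@deg N).
Local Notation Gen := (@Gen N R).
Local Notation S0 := (@S0 N R).
Local Notation S0lin := (@S0lin N R).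
Local Notation DMs := (@DMs N R).

Lemma conv_S0 (m : M) : conv S0lin id << m >> = (m == mone)%:R.
Proof.
rewrite convU DeltaMonE; case: m => gs; rewrite [fmonom_val _]/=.
case: gs => [|g r].
  have -> : (FMonom [::] == (mone : M)) = true by rewrite -fmnil eqxx.
  change (DMs [::]) with [:: (1 : H, 1 : H)].
  rewrite big_seq1; change (S0lin 1 * 1 = true%:R).
  rewrite mulr1 mulr1n {1}(one_mono N R) S0linU S01; reflexivity.
have -> : (FMonom (g :: r) == (mone : M)) = false.
  by apply/negbTE; rewrite fmP fm1.
rewrite mulr0n.
change (DMs (g :: r)) with (tensor_mul (DeltaGen R (sval g).1 (sval g).2) (DMs r)).
rewrite /tensor_mul big_allpairs_dep.
rewrite (eq_big_seq (fun a => \sum_(b <- DMs r) S0lin b.1 * (S0lin a.1 * a.2) * b.2)); last first.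
  move=> a ain; apply: eq_big_seq => b bin.
  have [da ha] := classif_mono (DeltaGen_class ain).
  have [db hb] := classif_mono (DMs_class bin).
  rewrite (S0lin_mul ha hb); exact: rearr.
rewrite exchange_big big1; [reflexivity | move=> b _].
by rewrite -mulr_suml -mulr_sumr gen_id mulr0 mul0r.
Qed.

Lemma S_mono (S : {linear H -> H}) : is_antipode S -> forall m : M, S << m >> = S0 m.
Proof.
move=> anti m; have [n] := ubnP (deg m); elim: n m => [|n IHn] m hm; first by exfalso; rewrite ltn0 in hm.
have E1 : \sum_(ab <- DeltaMon R m) (S ab.1 - S0lin ab.1) * ab.2 = 0.
  have [h1 _] := anti << m >>.
  rewrite convU counitU in h1; have h2 := conv_S0 m; rewrite convU in h2.
  rewrite (eq_bigr (fun ab => S ab.1 * ab.2 - S0lin ab.1 * ab.2)); last first.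
    by move=> ab _; rewrite mulrBl.
  rewrite (eq_bigr (fun ab => S ab.1 * ab.2)) in h1; last by [].
  rewrite (eq_bigr (fun ab => S0lin ab.1 * ab.2)) in h2; last by [].
  rewrite sumrB [X in _ - X]h2 [X in X - _]h1.
  case: (m == mone).
  - by rewrite !mulr1n scale1r subrr.
  - by rewrite !mulr0n scale0r subrr.
have E2 : \sum_(ab <- DeltaMon R m) (S ab.1 - S0lin ab.1) * ab.2 =
          (S << m >> - S0 m) *+ count_mem (<< m >>, 1) (DeltaMon R m).
  rewrite -sum_if_count; apply: eq_big_seq => -[a b] abin.
  case: eqP => [[-> ->]|ne]; first by rewrite mulr1 S0linU.
  have := DMs_class abin.
  clear E1; case: m hm abin ne => gs hm abin ne.
  case=> [/= ha|[m' [/= ha c]]].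
    by rewrite ha linear0 S0lin0 subrr mul0r.
  rewrite ha.
  case: c => [/= hb|[lt|[e1 /= hb]]].
  - by rewrite hb mulr0.
  - rewrite IHn; first by rewrite S0linU subrr mul0r.
    by move: lt hm => lt1 hm1; apply: (leq_trans lt1); exact: hm1.
  - by exfalso; apply: ne; rewrite ha hb e1.
have cpos : (0 < count_mem (<< m >>, 1%R : H) (DeltaMon R m))%N.
  rewrite -has_count has_pred1 DeltaMonE.
  have := DMs_top R (fmonom_val m); rewrite (_ : FMonom (fmonom_val m) = m) //.
  by clear E1 E2; case: m {hm}.
apply/eqP; rewrite -subr_eq0; apply/eqP.
move: E1; rewrite E2 => E3.
apply/malgP => k; rewrite mcoeff0.
have := congr1 (mcoeff k) E3; rewrite mcoeffMn mcoeff0 => /eqP.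
by rewrite mulrn_eq0 gtn_eqF //= => /eqP.
Qed.

End Alg5.

Theorem corollary3 (N : nat) (R : realType) (S : {linear IPH N R -> IPH N R}) :
  (1 <= N)%N -> is_antipode S ->
  forall (i : 'I_N) (u : seq 'I_N), (2 <= size u)%N ->
  forall rts : seq (ptree N),
    List.NoDup rts -> (forall T, List.In T rts <-> RT i u T) ->
    S (Yw R i u) = \sum_(T <- rts) (-1) ^+ pinner T * Lambda_r R T.
Proof.
move=> _ anti i u hu rts nd hrts.
rewrite (sum_rts (fun T => (-1) ^+ pinner T * Lambda_r R T) nd hrts).
rewrite (Yw_gen R i hu) (S_mono anti) /S0 fmU.
rewrite [rev _]/= big_seq1; reflexivity.
Qed.
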